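(* Let $(M,J,p)$ be a compatible projective almost complex structure, i.e. $G^p_-(X,X)=0$ for all vector fields $X$. Then the connection $\nabla^{JP}_XY:=\nabla^p_XY+G^p(Y,X)-G^p_+(X,Y)$ preserves $J$, and its geodesics (as parametrised curves) are exactly the geodesics of $\nabla^p$.
   Context: $J$: almost complex structure ($J^2=-\mathrm{id}$) on even-dimensional $M$. $p$: projective structure, a class of torsion-free affine connections with the same unparametrised geodesics (related by $\hat\nabla_aY^b=\nabla_aY^b+\Upsilon_aY^b+\Upsilon_cY^c\delta^b_a$). $\nabla^p$ is the unique connection in $p$ with $\nabla^p_aJ^a{}_b=0$. $G^p(X,Y):=-\frac12J(\nabla^p_YJ)X$, $G^p_\pm(X,Y):=\frac12(G^p(X,Y)\pm G^p(JX,JY))$. *)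

(* Defs.v *)
(* Local-coordinate formalization on an open set
   U of R^n (row vectors 'rV[R]_n). *)
From HB Require Import structures.
From mathcomp Require Import all_boot all_order all_algebra.
From mathcomp Require Import all_classical all_reals all_analysis.
Set Implicit Arguments. Unset Strict Implicit. Unset Printing Implicit Defensive.
Import Order.TTheory GRing.Theory Num.Theory.
Import numFieldNormedType.Exports.
Local Open Scope classical_set_scope.
Local Open Scope ring_scope.

Definition basis_vec (R : realType) (n : nat) (i : 'I_n) : 'rV[R]_n :=
  \row_j (i == j)%:R.

(* a (1,1)-tensor field in coordinates: J a b x = J^a_b(x), J(d_b) = J^a_b d_a *)
Definition endo_field (R : realType) (n : nat) := 'I_n -> 'I_n -> 'rV[R]_n -> R.

(* an affine connection via Christoffel symbols:
   Gam k i j x = Gamma^k_{ij}(x), i.e. nabla_{d_i} d_j = Gamma^k_{ij} d_k *)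
Definition christoffel (R : realType) (n : nat) :=
  'I_n -> 'I_n -> 'I_n -> 'rV[R]_n -> R.

Definition pd (R : realType) (n : nat) (i : 'I_n) (f : 'rV[R]_n -> R)
  (x : 'rV[R]_n) : R := 'D_(basis_vec R i) f x.

Definition covD_endo (R : realType) (n : nat) (Gam : christoffel R n)
  (J : endo_field R n) (c a b : 'I_n) (x : 'rV[R]_n) : R :=
  pd c (J a b) x + \sum_(d < n) Gam a c d x * J d b x
                 - \sum_(d < n) Gam d c b x * J a d x.

Definition torsion_free_on (R : realType) (n : nat) (U : set 'rV[R]_n)
  (Gam : christoffel R n) : Prop :=
  forall k i j x, U x -> Gam k i j x = Gam k j i x.

Definition almost_complex_on (R : realType) (n : nat) (U : set 'rV[R]_n)
  (J : endo_field R n) : Prop :=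
  forall a c x, U x -> \sum_(b < n) J a b x * J b c x = - (a == c)%:R.

Definition applyJ (R : realType) (n : nat) (J : endo_field R n)
  (x : 'rV[R]_n) (X : 'rV[R]_n) : 'rV[R]_n :=
  \row_a \sum_(b < n) J a b x * X ord0 b.

(* G(X,Y) = -1/2 J (nabla_Y J) X at x *)
Definition Gten (R : realType) (n : nat) (Gam : christoffel R n)
  (J : endo_field R n) (x X Y : 'rV[R]_n) : 'rV[R]_n :=
  \row_k ((- (1 / 2)) * \sum_(a < n) J k a x *
      (\sum_(c < n) \sum_(b < n) covD_endo Gam J c a b x * Y ord0 c * X ord0 b)).

Definition Gplus (R : realType) (n : nat) (Gam : christoffel R n)
  (J : endo_field R n) (x X Y : 'rV[R]_n) : 'rV[R]_n :=
  (1 / 2) *: (Gten Gam J x X Y + Gten Gam J x (applyJ J x X) (applyJ J x Y)).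

Definition Gminus (R : realType) (n : nat) (Gam : christoffel R n)
  (J : endo_field R n) (x X Y : 'rV[R]_n) : 'rV[R]_n :=
  (1 / 2) *: (Gten Gam J x X Y - Gten Gam J x (applyJ J x X) (applyJ J x Y)).

Definition GammaJP (R : realType) (n : nat) (Gam : christoffel R n)
  (J : endo_field R n) : christoffel R n :=
  fun k i j x => Gam k i j x
    + Gten Gam J x (basis_vec R j) (basis_vec R i) ord0 k
    - Gplus Gam J x (basis_vec R i) (basis_vec R j) ord0 k.

Definition geodesic_on (R : realType) (n : nat) (Gam : christoffel R n)
  (U : set 'rV[R]_n) (a b : R) (gam : R -> 'rV[R]_n) : Prop :=
  (forall t, a < t < b -> U (gam t)) /\
  (forall t, a < t < b -> derivable gam t 1 /\ derivable (derive1 gam) t 1) /\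
  (forall t, a < t < b -> forall k : 'I_n,
     derive1 (derive1 gam) t ord0 k
     + \sum_(i < n) \sum_(j < n)
         Gam k i j (gam t) * derive1 gam t ord0 i * derive1 gam t ord0 j = 0).

(* Main.v *)
Require Import Defs.
From HB Require Import structures.
From mathcomp Require Import all_boot all_order all_algebra.
From mathcomp Require Import all_classical all_reals all_analysis.
Import Order.TTheory GRing.Theory Num.Theory.
From mathcomp Require Import ring lra.
Import numFieldNormedType.Exports.
Local Open Scope classical_set_scope.
Local Open Scope ring_scope.

Lemma dJ2 (R : realType) (n : nat) (U : set 'rV[R]_n) (J : endo_field R n) c a d x :
  open U -> U x -> (forall a b x, U x -> differentiable (J a b) x) ->
  almost_complex_on U J ->
  \sum_(e < n) (pd c (J a e) x * J e d x + J a e x * pd c (J e d) x) = 0.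
Proof.
move=> oU Ux dJ aJ.
have h0 : pd c (\sum_(e < n) (J a e * J e d)) x = 0.
  rewrite /pd (@near_eq_derive _ _ _ _ (cst (- (a == d)%:R : R))).
    by rewrite derive_cst.
  have : \forall y \near x, U y by apply: open_nbhs_nbhs.
  apply: filterS => y Uy; rewrite /= -(aJ a d y Uy) fct_sumE.
  by [].
rewrite -[RHS]h0 /pd derive_sum; last first.
  move=> e; apply: derivableM; exact: diff_derivable (dJ _ _ _ Ux).
apply: eq_bigr => e _; rewrite deriveM; try exact: diff_derivable (dJ _ _ _ Ux).
by rewrite addrC /GRing.scale /= mulrC; congr (_ + _); rewrite mulrC.
Qed.

Lemma zl (V:zmodType) (x y z w : V): x + - y - z + (w + z - - y) = x + w.
Proof. by rewrite opprK [w + z + y]addrAC addrACA addNr addr0 addrACA addNr addr0. Qed.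

Section M.
Variables (R : realType) (n : nat).

Lemma A1 (d g j : 'M[R]_n) : j *m j = -1%:M -> d *m j + j *m d = 0 ->
  (d + g *m j - j *m g) *m j + j *m (d + g *m j - j *m g) = 0.
Proof.
move=> jj dj.
rewrite !(mulmxDl, mulmxBl, mulmxDr, mulmxBr) mulNmx mulmxN.
rewrite -[g *m j *m j]mulmxA -[j *m g *m j]mulmxA [j *m (j *m g)]mulmxA jj.
rewrite mulmxN mulmx1 mulNmx mul1mx zl; exact dj.
Qed.

Lemma A2 (K N P : 'M[R]_n) : K *m K = -1%:M -> K *m N + N *m K = 0 ->
  N + K *m ((- (1/2)) *: (N *m K) + (1/2 * (1/2)) *: (P *m K + K *m P))
    - ((- (1/2)) *: (N *m K) + (1/2 * (1/2)) *: (P *m K + K *m P)) *m K = 0.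
Proof.
move=> KK KN.
have KN' : K *m N = - (N *m K) by apply/eqP; rewrite -subr_eq0 opprK KN.
rewrite mulmxDr mulmxDl -!scalemxAr -!scalemxAl mulmxDr mulmxDl !mulmxA.
rewrite KN' mulNmx -!mulmxA KK !mulmxN !mulmx1 !mulmxA KK !mulNmx !mul1mx.
set a := (- (1/2)) : R; set b := (1/2 * (1/2)) : R.
rewrite opprK scalerN [- P + _]addrC.
have -> : forall (V : zmodType) (u y z : V), u + (y + z) - (- y + z) = u + y + y.
  by move=> V u y z; rewrite opprD opprK -addrA addrACA subrr addr0 addrA.
have -> : N + a *: N + a *: N = (1 + a + a) *: N by rewrite !scalerDl scale1r.
have -> : 1 + a + a = 0 by rewrite /a; field.
by rewrite scale0r.
Qed.
End M.

Section C.
Variables (R : realType) (n : nat) (J : endo_field R n) (Gam : christoffel R n).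

Definition Jm x : 'M[R]_n := \matrix_(a, b) J a b x.
Definition Dm c x : 'M[R]_n := \matrix_(a, b) pd c (J a b) x.
Definition Gm c x : 'M[R]_n := \matrix_(a, d) Gam a c d x.
Definition Nm c x : 'M[R]_n := \matrix_(a, b) covD_endo Gam J c a b x.

Lemma covD_mx c x : Nm c x = Dm c x + Gm c x *m Jm x - Jm x *m Gm c x.
Proof.
apply/matrixP => a b; rewrite !mxE /covD_endo; congr (_ + _ - _).
- by apply: eq_bigr => d _; rewrite !mxE.
- by apply: eq_bigr => d _; rewrite !mxE mulrC.
Qed.

Lemma sum_basis (F : 'I_n -> R) i : \sum_j F j * basis_vec R i ord0 j = F i.
Proof.
rewrite (bigD1 i) //= big1 ?addr0; first by rewrite mxE eqxx mulr1.
by move=> j ji; rewrite mxE eq_sym (negPf ji) mulr0.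
Qed.

Lemma sum_basis' (F : 'I_n -> R) i : \sum_j basis_vec R i ord0 j * F j = F i.
Proof. by rewrite -(sum_basis F i); apply: eq_bigr => j _; rewrite mulrC. Qed.

Definition gt b c k x := Gten Gam J x (basis_vec R b) (basis_vec R c) ord0 k.

Lemma gt_val b c k x :
  gt b c k x = - (1/2) * \sum_a J k a x * covD_endo Gam J c a b x.
Proof.
rewrite /gt /Gten mxE; congr (_ * _); apply: eq_bigr => a _; congr (_ * _).
rewrite -[RHS](sum_basis' (fun c' => covD_endo Gam J c' a b x) c).
apply: eq_bigr => c' _.
by rewrite (sum_basis (fun b0 => covD_endo Gam J c' a b0 x * basis_vec R c ord0 c') b) mulrC.
Qed.

Lemma Gexp x u v k : Gten Gam J x u v ord0 k =
  \sum_b \sum_c u ord0 b * v ord0 c * gt b c k x.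
Proof.
rewrite /Gten mxE.
rewrite !big_distrr /=.
under [RHS]eq_bigr do under eq_bigr do rewrite gt_val !big_distrr /=.
under [RHS]eq_bigr do rewrite exchange_big /=.
rewrite [RHS]exchange_big /=.
apply: eq_bigr => a _; rewrite [RHS]exchange_big !big_distrr /=.
apply: eq_bigr => b _; rewrite !big_distrr /=.
apply: eq_bigr => c _.
ring.
Qed.

Lemma entryZD (a : R) (u v : 'rV[R]_n) k :
  (a *: (u + v)) ord0 k = a * (u ord0 k + v ord0 k).
Proof. by rewrite !mxE. Qed.

Lemma entryZB (a : R) (u v : 'rV[R]_n) k :
  (a *: (u - v)) ord0 k = a * (u ord0 k - v ord0 k).
Proof. by rewrite !mxE. Qed.

Definition bil (u v : 'rV[R]_n) (M : 'M[R]_n) :=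
  \sum_b \sum_c u ord0 b * v ord0 c * M b c.

Lemma bil_mx u v M : bil u v M = (u *m M *m v^T) ord0 ord0.
Proof.
rewrite /bil !mxE; under [RHS]eq_bigr do rewrite !mxE big_distrl /=.
rewrite [RHS]exchange_big /=; apply: eq_bigr => b _; apply: eq_bigr => c _.
ring.
Qed.

Lemma bil_lin u v (A B C : 'M[R]_n) (a : R) :
  bil u v (A - a *: (B + C)) = bil u v A - a * (bil u v B + bil u v C).
Proof.
rewrite /bil mulrDr !big_distrr -big_split -sumrB /=; apply: eq_bigr => b _.
rewrite !big_distrr -big_split -sumrB /=; apply: eq_bigr => c _.
rewrite !mxE; ring.
Qed.

Lemma bil_tr u (A : 'M[R]_n) : bil u u A^T = bil u u A.
Proof.
rewrite /bil exchange_big /=; apply: eq_bigr => b _; apply: eq_bigr => c _.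
rewrite !mxE; ring.
Qed.

Lemma bil_basis i j M : bil (basis_vec R i) (basis_vec R j) M = M i j.
Proof.
rewrite /bil -(sum_basis' (fun b => M b j) i); apply: eq_bigr => b _.
rewrite -(sum_basis' (fun c => M b c) j) big_distrr /=; apply: eq_bigr => c _.
by rewrite mulrA.
Qed.

Definition Gk k x : 'M[R]_n := \matrix_(b, c) gt b c k x.

Lemma Gbil x u v k : Gten Gam J x u v ord0 k = bil u v (Gk k x).
Proof.
rewrite Gexp /bil; apply: eq_bigr => b _; apply: eq_bigr => c _; by rewrite mxE.
Qed.

Lemma applyJ_mx x u : applyJ J x u = u *m (Jm x)^T.
Proof.
apply/matrixP => i b; rewrite !mxE (ord1 i); apply: eq_bigr => d _.
by rewrite !mxE mulrC.
Qed.

Lemma GJbil x u v k : Gten Gam J x (applyJ J x u) (applyJ J x v) ord0 k =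
  bil u v ((Jm x)^T *m Gk k x *m (Jm x)^T^T).
Proof.
by rewrite Gbil !bil_mx !applyJ_mx trmx_mul !mulmxA.
Qed.

Lemma quad x X k : Gminus Gam J x X X = 0 ->
  \sum_i \sum_j GammaJP Gam J k i j x * X ord0 i * X ord0 j =
  \sum_i \sum_j Gam k i j x * X ord0 i * X ord0 j.
Proof.
move=> hm.
set M := (Jm x)^T *m Gk k x *m (Jm x)^T^T.
set D := (Gk k x)^T - (1/2) *: (Gk k x + M).
have e1 : forall i j, GammaJP Gam J k i j x * X ord0 i * X ord0 j =
   Gam k i j x * X ord0 i * X ord0 j + X ord0 i * X ord0 j * D i j.
  move=> i j; rewrite /GammaJP /Gplus entryZD.
  rewrite GJbil !Gbil !bil_basis /D /M !mxE; ring.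
under eq_bigr do under eq_bigr do rewrite e1.
under eq_bigr do rewrite big_split /=.
rewrite big_split /= -[RHS]addr0; congr (_ + _).
have := congr1 (fun v : 'rV[R]_n => v ord0 k) hm.
rewrite /Gminus /= entryZB GJbil Gbil mxE -/M => h.
rewrite -/(bil X X D) /D bil_lin bil_tr; rewrite -[RHS]h; set p := bil _ _ (Gk k x); set q := bil _ _ M; rewrite /= in p q *; by field.
Qed.

Lemma sum_delta (F : 'I_n -> R) k : \sum_b (k == b)%:R * F b = F k.
Proof.
rewrite (bigD1 k) //= big1 ?addr0; first by rewrite eqxx mul1r.
by move=> j jk; rewrite eq_sym (negPf jk) mul0r.
Qed.

Lemma JJ_mx x : (forall a c, \sum_b J a b x * J b c x = - (a == c)%:R) ->
  Jm x *m Jm x = - 1%:M.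
Proof.
move=> h; apply/matrixP => a c; rewrite !mxE -h.
by apply: eq_bigr => b _; rewrite !mxE.
Qed.

Lemma DJ_mx c x :
  (forall a d, \sum_(e < n) (pd c (J a e) x * J e d x + J a e x * pd c (J e d) x) = 0) ->
  Dm c x *m Jm x + Jm x *m Dm c x = 0.
Proof.
move=> h; apply/matrixP => a d; rewrite !mxE -[RHS](h a d) big_split /=.
by congr (_ + _); apply: eq_bigr => e _; rewrite !mxE.
Qed.

Lemma anti_e d x a c : Nm d x *m Jm x + Jm x *m Nm d x = 0 ->
  \sum_b covD_endo Gam J d a b x * J b c x = - \sum_b J a b x * covD_endo Gam J d b c x.
Proof.
move=> /matrixP /(_ a c); rewrite !mxE => h.
apply/eqP; rewrite -subr_eq0 opprK.
rewrite -[X in _ == X]h; apply/eqP; congr (_ + _); apply: eq_bigr => b _; by rewrite !mxE.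
Qed.

Lemma GJ_val x c j k :
  (forall a c, \sum_b J a b x * J b c x = - (a == c)%:R) ->
  (forall d, Nm d x *m Jm x + Jm x *m Nm d x = 0) ->
  ((Jm x)^T *m Gk k x *m (Jm x)^T^T) c j =
    - (1/2) * \sum_d J d j x * covD_endo Gam J d k c x.
Proof.
move=> hJ hN; rewrite trmxK mxE big_distrr /=; apply: eq_bigr => d _.
rewrite mxE.
have -> : \sum_b (Jm x)^T c b * Gk k x b d =
    - (1/2) * \sum_a J k a x * \sum_b covD_endo Gam J d a b x * J b c x.
  under eq_bigr do rewrite !mxE gt_val big_distrr big_distrr /=.
  rewrite [RHS]big_distrr /=.
  under [RHS]eq_bigr do rewrite big_distrr /= big_distrr /=.
  rewrite [RHS]exchange_big /=; apply: eq_bigr => b _.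
  apply: eq_bigr => a _; ring.
have -> : \sum_a J k a x * \sum_b covD_endo Gam J d a b x * J b c x =
    covD_endo Gam J d k c x.
  under eq_bigr do rewrite anti_e // mulrN big_distrr /=.
  rewrite sumrN exchange_big /=.
  under eq_bigr do (under eq_bigr do rewrite mulrA; rewrite -big_distrl /= hJ mulNr).
  by rewrite sumrN opprK sum_delta.
rewrite !mxE; ring.
Qed.

Lemma entry3 (A B C : 'M[R]_n) i j : (A + B - C) i j = A i j + B i j - C i j.
Proof. by rewrite !mxE. Qed.

Lemma trmx_e (A : 'M[R]_n) i j : A^T i j = A j i.
Proof. by rewrite mxE. Qed.

Lemma Nm_e c x a b : Nm c x a b = covD_endo Gam J c a b x.
Proof. by rewrite mxE. Qed.

Lemma part1_alg x c a b :
  (forall a c, \sum_b J a b x * J b c x = - (a == c)%:R) ->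
  (forall d, Nm d x *m Jm x + Jm x *m Nm d x = 0) ->
  covD_endo (GammaJP Gam J) J c a b x = 0.
Proof.
move=> hJ hN.
set K := (Jm x)^T. set Nt := (Nm c x)^T.
set P := \matrix_(j, a) covD_endo Gam J j a c x.
set Bm := \matrix_(j, k) (GammaJP Gam J k c j x - Gam k c j x).
have e1 : covD_endo (GammaJP Gam J) J c a b x = (Nt + K *m Bm - Bm *m K) b a.
  have h1 : \sum_d GammaJP Gam J a c d x * J d b x =
      \sum_d Gam a c d x * J d b x + \sum_d K b d * Bm d a.
    rewrite -big_split /=; apply: eq_bigr => d _; rewrite !mxE; ring.
  have h2 : \sum_d GammaJP Gam J d c b x * J a d x =
      \sum_d Gam d c b x * J a d x + \sum_d Bm b d * K d a.
    rewrite -big_split /=; apply: eq_bigr => d _; rewrite !mxE; ring.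
  rewrite entry3 /Nt trmx_e Nm_e /covD_endo h1 h2 [(K *m Bm) b a]mxE [(Bm *m K) b a]mxE.
  ring.
have e2 : Bm = (- (1/2)) *: (Nt *m K) + (1/2 * (1/2)) *: (P *m K + K *m P).
  apply/matrixP => j k.
  rewrite [LHS]mxE /GammaJP /Gplus entryZD GJbil !Gbil !bil_basis.
  rewrite [Gk k x j c]mxE [Gk k x c j]mxE !gt_val GJ_val //.
  have s1 : \sum_j0 Nt j j0 * K j0 k = \sum_a0 J k a0 x * covD_endo Gam J c a0 j x.
    by apply: eq_bigr => i _; rewrite /Nt /K !mxE mulrC.
  have s2 : \sum_j0 P j j0 * K j0 k = \sum_a0 J k a0 x * covD_endo Gam J j a0 c x.
    by apply: eq_bigr => i _; rewrite /P /K !mxE mulrC.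
  have s3 : \sum_j0 K j j0 * P j0 k = \sum_d J d j x * covD_endo Gam J d k c x.
    by apply: eq_bigr => i _; rewrite /P /K !mxE.
  rewrite !mxE s1 s2 s3; ring.
have KK : K *m K = -1%:M.
  by rewrite /K -trmx_mul JJ_mx // linearN /= trmx1.
have KN : K *m Nt + Nt *m K = 0.
  by rewrite /K /Nt -!trmx_mul -linearD /= hN trmx0.
by rewrite e1 e2 A2 // mxE.
Qed.
End C.

Theorem corollary5p7 (R : realType) (n : nat) (U : set 'rV[R]_n)
  (J : endo_field R n) (Gam : christoffel R n) :
  ~~ odd n ->
  open U ->
  (forall a b x, U x -> differentiable (J a b) x) ->
  almost_complex_on U J ->
  torsion_free_on U Gam ->
  (* Gam is nabla^p: nabla^p_a J^a_b = 0 *)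
  (forall b x, U x -> \sum_(a < n) covD_endo Gam J a a b x = 0) ->
  (* compatibility: G^p_-(X,X) = 0 *)
  (forall x X, U x -> Gminus Gam J x X X = 0) ->
  (forall c a b x, U x -> covD_endo (GammaJP Gam J) J c a b x = 0) /\
  (forall (a b : R) (gam : R -> 'rV[R]_n), a < b ->
     (geodesic_on (GammaJP Gam J) U a b gam <-> geodesic_on Gam U a b gam)).
Proof.
move=> _ oU dJ aJ _ _ cm; split.
  move=> c a b x Ux; apply: part1_alg; first by move=> a' c'; exact: aJ.
  move=> d; rewrite covD_mx; apply: A1.
    by apply: JJ_mx => a' c'; exact: aJ.
  by apply: DJ_mx => a' d'; exact: (@dJ2 _ _ U J _ _ _ x oU Ux dJ aJ).
move=> a b gam _; split => -[h1 [h2 h3]]; (split; [exact: h1|split; [exact: h2|]]);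
  move=> t ht k; move: (h3 t ht k).
  by rewrite quad //; exact: cm (h1 t ht).
by rewrite quad //; exact: cm (h1 t ht).
Qed.
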